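(* Let $\Delta,\Sigma$ be alphabets, $\varphi:\Delta\to2^{\Sigma^*}$ a regular language substitution, $R\subseteq\Sigma^*$ a regular language, and $M'\subseteq\Delta^*$ a regular language that has 1-word summaries and satisfies $\varphi(M')\subseteq R$. Then there exists $w\in M'$ with $\varphi(w)=R$ if and only if there exists a finite subset $F\subseteq M'$ with $\varphi(F)=\varphi(M')=R$.
   Context: A regular language substitution $\varphi:\Delta\to2^{\Sigma^*}$ maps each symbol to a regular language over $\Sigma$, extended to words by $\varphi(\varepsilon)=\{\varepsilon\}$, $\varphi(\delta w)=\varphi(\delta)\varphi(w)$, and to sets of words by $\varphi(L)=\bigcup_{w\in L}\varphi(w)$. A language $M'\subseteq\Delta^*$ has 1-word summaries if for every finite subset $F\subseteq M'$ there exists a word $w\in M'$ with $\varphi(F)\subseteq\varphi(w)$. *)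

(* Defs.v *)
From mathcomp Require Import all_boot.
Set Implicit Arguments. Unset Strict Implicit. Unset Printing Implicit Defensive.

Definition lang (S : finType) := seq S -> Prop.

Record dfa (S : finType) := DFA {
  dfa_state : finType;
  dfa_start : dfa_state;
  dfa_final : pred dfa_state;
  dfa_trans : dfa_state -> S -> dfa_state }.

Definition dfa_accept (S : finType) (A : dfa S) (w : seq S) : bool :=
  @dfa_final S A (foldl (@dfa_trans S A) (@dfa_start S A) w).

Definition regular (S : finType) (L : lang S) : Prop :=
  exists A : dfa S, forall w, L w <-> dfa_accept A w.

Definition conc (S : finType) (L1 L2 : lang S) : lang S :=
  fun u => exists u1 u2, u = u1 ++ u2 /\ L1 u1 /\ L2 u2.

Fixpoint subst_word (D S : finType) (phi : D -> lang S) (w : seq D) : lang S :=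
  match w with
  | [::] => fun u => u = [::]
  | d :: w' => conc (phi d) (subst_word phi w')
  end.

Definition subst_lang (D S : finType) (phi : D -> lang S) (L : lang D) : lang S :=
  fun u => exists w, L w /\ subst_word phi w u.

Definition regular_subst (D S : finType) (phi : D -> lang S) : Prop :=
  forall d, regular (phi d).

(* Finite subsets of M are given as finite sequences of words of M. *)
Definition fin_sub (D : finType) (F : seq (seq D)) (M : lang D) : Prop :=
  forall w, w \in F -> M w.

Definition lang_of_seq (D : finType) (F : seq (seq D)) : lang D :=
  fun w => w \in F.

Definition one_word_summaries (D S : finType) (phi : D -> lang S) (M : lang D) : Prop :=
  forall F : seq (seq D), fin_sub F M ->
    exists w, M w /\ (forall u, subst_lang phi (lang_of_seq F) u -> subst_word phi w u).

Definition lang_eq (S : finType) (L1 L2 : lang S) : Prop := forall u, L1 u <-> L2 u.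
Definition lang_sub (S : finType) (L1 L2 : lang S) : Prop := forall u, L1 u -> L2 u.

(* Main.v *)
Require Import Defs.
From mathcomp Require Import all_boot.

Theorem proposition13 (D S : finType) (phi : D -> lang S) (R : lang S) (M' : lang D) :
  regular_subst phi -> regular R -> regular M' ->
  one_word_summaries phi M' ->
  lang_sub (subst_lang phi M') R ->
  (exists w, M' w /\ lang_eq (subst_word phi w) R) <->
  (exists F : seq (seq D), fin_sub F M' /\
     lang_eq (subst_lang phi (lang_of_seq F)) (subst_lang phi M') /\
     lang_eq (subst_lang phi M') R).
Proof.
move=> _ _ _ Hsum Hsub; split.
- case=> w [Mw Hw].
  have E : lang_eq (subst_lang phi M') R.
    move=> u; split; first exact: Hsub.
    by move=> /Hw Hu; exists w.
  exists [:: w]; split; first by move=> v; rewrite inE => /eqP ->.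
  split=> // u; split.
  + case=> v []; rewrite /lang_of_seq inE => /eqP -> Hv; by exists w.
  + move=> /E /Hw Hu; exists w; split=> //; by rewrite /lang_of_seq inE.
- case=> F [HF [E1 E2]].
  have [w [Mw Hw]] := Hsum F HF.
  exists w; split=> // u; split.
  + by move=> Hu; apply: Hsub; exists w.
  + by move=> /E2 /E1 /Hw.
Qed.
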